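(* Let $(L,\le,(\sqsubseteq_\alpha)_{\alpha<\kappa})$ be a model of Axioms 1–4 with $\kappa$ a limit ordinal. Let $\alpha<\kappa$ and let $f:L\to L$ be $\alpha$-monotonic. Suppose $x\in L$ satisfies $x\sqsubseteq_\alpha f(x)$. Then there is $y\in L$ with the following properties: (1) $x\sqsubseteq_\alpha y$ and $y=_\alpha f(y)$; (2) for every $z\in L$, if $x\sqsubseteq_\alpha z$ and $f(z)\sqsubseteq_\alpha z$, then $y\sqsubseteq_\alpha z$; (3) $y$ is the $\le$-least element of $[y]_\alpha$; moreover $y\sqsubseteq_{\alpha+1}w$ for all $w\in[y]_\alpha$, and $y\sqsubseteq_{\alpha+1}f(y)$.
   Context: Setting (model of Axioms 1–4). Let $(L,\le)$ be a complete lattice with join operation $\bigvee$ and least element $\perp$. Let $\kappa>0$ be an ordinal, and for each ordinal $\alpha<\kappa$ let $\sqsubseteq_\alpha$ be a preorder on $L$. Derived relations: - $x=_\alpha y$ means $x\sqsubseteq_\alpha y$ and $y\sqsubseteq_\alpha x$. - $x\sqsubset_\alpha y$ means $x\sqsubseteq_\alpha y$ and not $x=_\alpha y$. Derived sets, for $x\in L$ and $\alpha<\kappa$: - $(x]_\alpha=\{y\in L:\forall\beta<\alpha,\ x=_\beta y\}$. - $[x]_\alpha=\{y\in L: x=_\alpha y\}$. For a set $X$, $X\sqsubseteq_\alpha y$ means $x\sqsubseteq_\alpha y$ for all $x\in X$. The structure is a model of Axioms 1–4 if: - (A1) for all $\alpha<\beta<\kappa$, $x\sqsubseteq_\beta y$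 implies $x=_\alpha y$; - (A2) $\bigcap_{\alpha<\kappa}=_\alpha$ is the identity relation on $L$; - (A3) for every $x\in L$, every $\alpha<\kappa$ and every $X\subseteq(x]_\alpha$ there is $y\in(x]_\alpha$ with $X\sqsubseteq_\alpha y$ such that for all $z\in(x]_\alpha$ with $X\sqsubseteq_\alpha z$ we have $y\sqsubseteq_\alpha z$ and $y\le z$; - (A4) for every nonempty $X\subseteq L$, every $\alpha<\kappa$ and every $y\in L$, if $y=_\alpha x$ for all $x\in X$ then $y=_\alpha\bigvee X$. A function $f:L\to L$ is $\alpha$-monotonic if $x\sqsubseteq_\alpha y$ implies $f(x)\sqsubseteq_\alpha f(y)$. *)

(* Defs.v *)
Record complete_lattice (L : Type) := {
  cl_le : L -> L -> Prop;
  cl_le_refl : forall x, cl_le x x;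
  cl_le_trans : forall x y z, cl_le x y -> cl_le y z -> cl_le x z;
  cl_le_antisym : forall x y, cl_le x y -> cl_le y x -> x = y;
  cl_sup : (L -> Prop) -> L;
  cl_sup_ub : forall (X : L -> Prop) x, X x -> cl_le x (cl_sup X);
  cl_sup_least : forall (X : L -> Prop) z,
      (forall x, X x -> cl_le x z) -> cl_le (cl_sup X) z
}.
Arguments cl_le {L} c _ _.
Arguments cl_sup {L} c _.

(** The ordinal kappa is represented by a type I of indices (the ordinals
    < kappa) with a strict well-order lt. *)
Record well_order {I : Type} (lt : I -> I -> Prop) : Prop := {
  wo_irrefl : forall a, ~ lt a a;
  wo_trans : forall a b c, lt a b -> lt b c -> lt a c;
  wo_total : forall a b, lt a b \/ a = b \/ lt b a;
  wo_wf : well_founded lt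
}.

(** kappa is a limit ordinal: kappa > 0 and every alpha < kappa has
    alpha + 1 < kappa. *)
Definition is_limit {I : Type} (lt : I -> I -> Prop) : Prop :=
  (exists a : I, True) /\ forall a : I, exists b, lt a b.

Definition is_succ {I : Type} (lt : I -> I -> Prop) (a b : I) : Prop :=
  lt a b /\ forall c, lt a c -> c = b \/ lt b c.

Definition is_preorder {L : Type} (R : L -> L -> Prop) : Prop :=
  (forall x, R x x) /\ (forall x y z, R x y -> R y z -> R x z).

Section Derived.
Context {L I : Type} (lt : I -> I -> Prop) (sq : I -> L -> L -> Prop).

Definition eqa (a : I) (x y : L) : Prop := sq a x y /\ sq a y x.

Definition sqlt (a : I) (x y : L) : Prop := sq a x y /\ ~ eqa a x y.

Definition lowcone (x : L) (a : I) : L -> Prop :=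
  fun y => forall b, lt b a -> eqa b x y.

Definition eqclass (x : L) (a : I) : L -> Prop := fun y => eqa a x y.

Definition set_sq (a : I) (X : L -> Prop) (y : L) : Prop :=
  forall x, X x -> sq a x y.

Definition alpha_monotonic (a : I) (f : L -> L) : Prop :=
  forall x y, sq a x y -> sq a (f x) (f y).
End Derived.

Definition model_A1_4 {L I : Type} (CL : complete_lattice L)
    (lt : I -> I -> Prop) (sq : I -> L -> L -> Prop) : Prop :=
  (forall a, is_preorder (sq a)) /\
  (forall a b x y, lt a b -> sq b x y -> eqa sq a x y) /\
  (forall x y, (forall a, eqa sq a x y) -> x = y) /\
  (forall x a (X : L -> Prop),
      (forall z, X z -> lowcone lt sq x a z) ->
      exists y, lowcone lt sq x a y /\ set_sq sq a X y /\
        forall z, lowcone lt sq x a z -> set_sq sq a X z ->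
          sq a y z /\ cl_le CL y z) /\
  (forall (X : L -> Prop) a y, (exists x, X x) ->
      (forall x, X x -> eqa sq a y x) -> eqa sq a y (cl_sup CL X)).

(* Main.v *)
Require Import Defs.

Theorem mainTheorem3 (L I : Type) (CL : complete_lattice L)
    (lt : I -> I -> Prop) (sq : I -> L -> L -> Prop)
    (Hwo : well_order lt) (Hmodel : model_A1_4 CL lt sq)
    (Hlim : is_limit lt)
    (a : I) (f : L -> L) (Hmono : alpha_monotonic sq a f)
    (x : L) (Hx : sq a x (f x)) :
  exists y : L,
    (sq a x y /\ eqa sq a y (f y)) /\
    (forall z, sq a x z -> sq a (f z) z -> sq a y z) /\
    (eqclass sq y a y /\ (forall w, eqclass sq y a w -> cl_le CL y w)) /\
    (forall a1, is_succ lt a a1 ->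
       (forall w, eqclass sq y a w -> sq a1 y w) /\ sq a1 y (f y)).
Proof.
  destruct Hmodel as [Hpre [HA1 [HA2 [HA3 HA4]]]].
  assert (refl : forall c u, sq c u u) by (intro c; apply (proj1 (Hpre c))).
  assert (tr : forall c u v w, sq c u v -> sq c v w -> sq c u w)
    by (intro c; apply (proj2 (Hpre c))).
  set (Lb := fun z => sq a x z /\ forall p, sq a x p -> sq a (f p) p -> sq a z p).
  destruct (HA3 x a (fun z => z = x \/ Lb z)) as [y [Hyc [Hyub Hyl]]].
  { intros z [->|[Hz _]] b Hb.
    - split; apply refl.
    - exact (HA1 b a x z Hb Hz). }
  assert (Hxy : sq a x y) by (apply Hyub; left; reflexivity).
  assert (HP : forall p, sq a x p -> sq a (f p) p -> sq a y p).
  { intros p Hp Hfp. apply (Hyl p).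
    - intros b Hb. exact (HA1 b a x p Hb Hp).
    - intros z [->|[_ Hz]]; auto. }
  assert (Hfy : sq a (f y) y).
  { apply Hyub. right. split.
    - apply (tr _ _ (f x)); auto.
    - intros p Hp Hfp. apply (tr _ _ (f p)); auto. }
  assert (Hyf : sq a y (f y)).
  { apply HP; [apply (tr _ _ (f x)); [assumption | apply Hmono; assumption] | apply Hmono; assumption]. }
  assert (Hleast : forall w, eqclass sq y a w -> cl_le CL y w).
  { intros w [Hyw Hwy]. apply (Hyl w).
    - intros b Hb. destruct (Hyc b Hb) as [h1 h2].
      destruct (HA1 b a y w Hb Hyw) as [h3 h4]. split; [apply (tr _ _ y) | apply (tr _ _ y)]; assumption.
    - intros z Hz. apply (tr _ _ y); auto. }
  exists y. split; [split; [exact Hxy | split; assumption]|].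
  split; [exact HP|]. split; [split; [split; apply refl | exact Hleast]|].
  intros a1 [Ha1 Hsucc].
  assert (Hcone : forall w, eqclass sq y a w -> lowcone lt sq y a1 w).
  { intros w Hw b Hb.
    destruct (wo_total _ Hwo b a) as [Hba|[->|Hab]].
    - exact (HA1 b a y w Hba (proj1 Hw)).
    - exact Hw.
    - exfalso. destruct (Hsucc b Hab) as [->|H].
      + exact (wo_irrefl _ Hwo _ Hb).
      + exact (wo_irrefl _ Hwo _ (wo_trans _ Hwo _ _ _ Hb H)). }
  destruct (HA3 y a1 (fun _ => False)) as [y' [Hy'c [_ Hy'l]]].
  { intros z []. }
  assert (Hy'y : y' = y).
  { apply (cl_le_antisym _ CL).
    - apply (proj2 (Hy'l y (fun b _ => conj (refl b y) (refl b y)) (fun _ h => match h with end))).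
    - apply Hleast. exact (Hy'c a Ha1). }
  subst y'.
  assert (Hall : forall w, eqclass sq y a w -> sq a1 y w).
  { intros w Hw. apply (proj1 (Hy'l w (Hcone w Hw) (fun _ h => match h with end))). }
  split; [exact Hall|]. apply Hall. split; assumption.
Qed.
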